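(* Let $I=(a..c)$ be a conserved interval of $\mathcal{P}$ and let $F$ be a set of frontiers of $I$. Then, in each $P_k$, the elements of $F$ are either all positive or all negative.
   Context: Let $n\geq 2$ and let $\mathcal{P}=\{P_1,\ldots,P_K\}$ be signed permutations of $\{1,\ldots,n\}$: each $P_k$ is an ordering of $1,\ldots,n$ in which each element carries a sign $+$ (positive) or $-$ (negative). Assume $P_1=(+1,+2,\ldots,+n)$ and that every $P_k$ has first element $+1$ and last element $+n$. For integers $i\leq j$ write $(i..j)=\{i,\ldots,j\}$. A conserved interval of $\mathcal{P}$ is either a singleton, or a set $(a..c)$ with $a<c$ which (ignoring signs) occupies consecutive positions in every $P_k$ and which, in every $P_k$, has either $+a$ at its left end and $+c$ at its right end, or $-c$ at its left end and $-a$ at its right end. For a conserved interval $I=(a..c)$, a set $\{f_1,\ldots,f_k\}$ with $a=f_1<f_2<\cdots<f_k=c$ is a set of frontiers of $I$ if $(f_i..f_j)$ is a conserved interval for all $1\leq i<j\leq k$. *)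

(* Defs.v *)
From mathcomp Require Import all_boot.
Set Implicit Arguments. Unset Strict Implicit. Unset Printing Implicit Defensive.

(* A signed element is a pair (sign, value); sign = true means positive (+),
   sign = false means negative (-). A signed permutation is a sequence of
   signed elements. *)
Definition selt := (bool * nat)%type.
Definition sperm := seq selt.

Definition is_sperm (n : nat) (P : sperm) : Prop :=
  perm_eq (map snd P) (iota 1 n).

Definition sperm_id (n : nat) : sperm := [seq (true, i) | i <- iota 1 n].

Definition conserved_in (P : sperm) (a c : nat) : Prop :=
  exists s t u : sperm,
    P = s ++ t ++ u /\
    perm_eq (map snd t) (iota a (c - a).+1) /\
    ((head (true, 0) t == (true, a)) && (last (true, 0) t == (true, c))
     || (head (true, 0) t == (false, c)) && (last (true, 0) t == (false, a))).

Definition conserved (n : nat) (Ps : seq sperm) (a c : nat) : Prop :=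
  1 <= a /\ a <= c /\ c <= n /\
  (a = c \/ (a < c /\ forall P, P \in Ps -> conserved_in P a c)).

Definition frontiers (n : nat) (Ps : seq sperm) (a c : nat) (F : seq nat) : Prop :=
  sorted ltn F /\ F != [::] /\ head 0 F = a /\ last 0 F = c /\
  forall i j, i < j < size F -> conserved n Ps (nth 0 F i) (nth 0 F j).

(* Main.v *)
Require Import Defs.
From mathcomp Require Import all_boot.
From mathcomp Require Import zify.

Lemma snd_inj (s : sperm) b b' f :
  uniq (map snd s) -> (b, f) \in s -> (b', f) \in s -> b = b'.
Proof.
elim: s => // [[x y] s IH] /= /andP [Hn Hu].
rewrite !in_cons => H1 H2.
case: (eqVneq (b, f) (x, y)) H1 => [E1 _|ne1 /= H1];
case: (eqVneq (b', f) (x, y)) H2 => [E2 _|ne2 /= H2].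
- case: E1 => -> _; by case: E2.
- case: E1 => _ E. subst f. case/negP: Hn. by apply/mapP; exists (b', y).
- case: E2 => _ E. subst f. case/negP: Hn. by apply/mapP; exists (b, y).
- exact: IH.
Qed.

Lemma ex_sign (s : sperm) f : f \in map snd s -> (true, f) \in s \/ (false, f) \in s.
Proof.
case/mapP => [[b y] Hin /= ->]. by case: b Hin; [left|right].
Qed.

Lemma pair_sign (P : sperm) x y : 1 <= x -> conserved_in P x y ->
  ((true, x) \in P /\ (true, y) \in P) \/ ((false, x) \in P /\ (false, y) \in P).
Proof.
move=> Hx [s [t [u [-> [_ H]]]]].
case: t H => [|z t] H.
  by case: x Hx H.
have memh : z \in s ++ (z :: t) ++ u by rewrite !mem_cat mem_head orbT.
have meml : last z t \in s ++ (z :: t) ++ u by rewrite !mem_cat mem_last orbT.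
move: H => /= /orP [/andP [/eqP Ez /eqP El]|/andP [/eqP Ez /eqP El]].
- left. by rewrite -Ez -El.
- right. by rewrite -Ez -El.
Qed.

Theorem lemma6 (n : nat) (P1 : sperm) (Ps' : seq sperm) (a c : nat) (F : seq nat) :
  2 <= n ->
  P1 = sperm_id n ->
  (forall P, P \in P1 :: Ps' -> is_sperm n P) ->
  (forall P, P \in P1 :: Ps' -> head (false, 0) P = (true, 1) /\ last (false, 0) P = (true, n)) ->
  conserved n (P1 :: Ps') a c ->
  frontiers n (P1 :: Ps') a c F ->
  forall P, P \in P1 :: Ps' ->
    (forall f, f \in F -> (true, f) \in P) \/ (forall f, f \in F -> (false, f) \in P).
Proof.
move=> n2 HP1 Hperm Hhd Hc [_ [Fne [Fh [Fl Hpairs]]]] P HP.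
have Hu : uniq (map snd P) by rewrite (perm_uniq (Hperm P HP)) iota_uniq.
have F0 : nth 0 F 0 = a by rewrite -Fh; case: (F) Fne.
have Fs : 0 < size F by case: (F) Fne.
have Hin : forall i, i < size F -> nth 0 F i \in map snd P.
  move=> i Hi. rewrite (perm_mem (Hperm P HP)) mem_iota.
  case: i Hi => [|i] Hi.
    rewrite F0. case: Hc => [? [? [? _]]]. apply/andP; split; lia.
  have := Hpairs 0 i.+1. rewrite Hi andbT => /(_ isT) [? [? [? _]]].
  apply/andP; split; lia.
have nf : forall x, (false, x) \in P -> ((true, x) \in P) = false.
  move=> x Hf. apply/negP => Ht. by have := @snd_inj P _ _ _ Hu Ht Hf.
have step : forall i, i.+1 < size F ->
    ((true, nth 0 F i) \in P) = ((true, nth 0 F i.+1) \in P).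
  move=> i Hi. have := Hpairs i i.+1. rewrite Hi ltnSn => /(_ isT).
  case=> [H1 [_ [_ [E|[_ Hall]]]]]; first by rewrite E.
  case: (@pair_sign P _ _ H1 (Hall P HP)) => [[-> ->]|[Ha Hb]] //.
  by rewrite (nf _ Ha) (nf _ Hb).
have all : forall i, i < size F ->
    ((true, nth 0 F i) \in P) = ((true, nth 0 F 0) \in P).
  elim=> [|i IH] Hi //. rewrite -step // IH //. lia.
have idx : forall f, f \in F -> f = nth 0 F (index f F) /\ index f F < size F.
  move=> f Hf. by rewrite nth_index // index_mem.
case E: ((true, nth 0 F 0) \in P); [left|right] => f Hf;
  case: (idx f Hf) => Ef Hi.
- by rewrite Ef all.
- have := all _ Hi. rewrite E -Ef => Ht.
  have := Hin _ Hi. rewrite -Ef => /(@ex_sign P) [|] //. by rewrite Ht.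
Qed.
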